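(* Assume the setting in the context, with a decomposition of $\mathcal X$ over $A$, $g\in\mathcal G_s$ and an integer $T>0$, and assume that $$\operatorname*{argmin}_{u\in\mathcal U} J^*_{t+1}(Ax+Bu)\cap\Big[\bigoplus_{i\in\mathcal I}\mathcal E_i\Big]\neq\emptyset\quad\text{for all }x\in\mathcal X,\ t\in\{0,\dots,T-1\}.$$ Then $J^*_t\in\mathcal G_s$ for every $t\in\{0,1,\dots,T\}$.
   Context: Let $\mathcal F$ be a field and $\mathcal X,\mathcal U$ finite-dimensional vector spaces over $\mathcal F$. Let $A:\mathcal X\to\mathcal X$ and $B:\mathcal U\to\mathcal X$ be linear maps with $B$ injective, and let $g:\mathcal X\to\mathbb R_{\ge0}$ satisfy $g(x)=0\iff x=0$. Standing assumption: all minima appearing below are attained. For the finite-horizon problem $(A,B,g,T)$ associated with the system $x_{t+1}=Ax_t+Bu_t$, the cost-to-go functions are defined by $J^*_T=g$ and $J^*_t(x)=g(x)+\min_{u\in\mathcal U}J^*_{t+1}(Ax+Bu)$ for $t=0,\dots,T-1$. A decomposition of $\mathcal X$ over $A$ is a direct sum $\mathcal X=\mathcal X_1\oplus\cdots\oplus\mathcal X_r$ with $r>1$ and $A\mathcal X_i\subseteq\mathcal X_i$ for all $i\in\mathcal I=\{1,\dots,r\}$; $\rho_i:\mathcal X\to\mathcal X_i$ is the projection along the other summands. $\mathcal G_s$ is the set of $h:\mathcal X\to\mathbb R_{\ge0}$ with $h(x)=\sum_i h(\rho_i(x))$ for all $x$. $\mathcal E_i=\{u\in\mathcal U:Bu\in\mathcal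 X_i\}$. *)

(* Defs.v *)
(* Real-number operations are written with explicit names (Rle, Rplus, R0) to avoid
   the %R scope clash between ring_scope and R_scope. *)
From Stdlib Require Import Reals.
From HB Require Import structures.
From mathcomp Require Import all_boot all_order all_algebra.
Set Implicit Arguments. Unset Strict Implicit. Unset Printing Implicit Defensive.
Import GRing.Theory.
Local Open Scope ring_scope.

Definition decomposition (F : fieldType) (X : vectType F) (A : 'End(X))
    (r : nat) (Xs : 'I_r -> {vspace X}) : Prop :=
  (1 < r)%N /\ directv (\sum_(i < r) Xs i)%VS /\ (\sum_(i < r) Xs i)%VS = fullv
  /\ forall i, (A @: Xs i <= Xs i)%VS.

Definition rho (F : fieldType) (X : vectType F) (r : nat)
    (Xs : 'I_r -> {vspace X}) (i : 'I_r) : 'End(X) :=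
  sumv_pi (\sum_(j < r) Xs j)%VS i.

Definition in_Gs (F : fieldType) (X : vectType F) (r : nat)
    (Xs : 'I_r -> {vspace X}) (h : X -> R) : Prop :=
  (forall x, Rle R0 (h x)) /\
  forall x, h x = \big[Rplus/R0]_(i < r) h (rho Xs i x).

Definition Espace (F : fieldType) (X U : vectType F) (B : 'Hom(U, X)) (r : nat)
    (Xs : 'I_r -> {vspace X}) (i : 'I_r) : {vspace U} :=
  (B @^-1: Xs i)%VS.

Definition is_min_value (T : Type) (f : T -> R) (m : R) : Prop :=
  (exists u, f u = m) /\ forall u, Rle m (f u).

Definition in_argmin (T : Type) (f : T -> R) (u : T) : Prop :=
  forall v, Rle (f u) (f v).

Definition cost_to_go (F : fieldType) (X U : vectType F) (A : 'End(X))
    (B : 'Hom(U, X)) (g : X -> R) (T : nat) (J : nat -> X -> R) : Prop :=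
  J T = g /\
  forall t, (t < T)%N -> forall x, exists m,
    is_min_value (fun u => J t.+1 (A x + B u)) m /\ J t x = Rplus (g x) m.

(* Main.v *)
Require Import Defs.
From Stdlib Require Import Reals.
From HB Require Import structures.
From mathcomp Require Import all_boot all_order all_algebra.
Import GRing.Theory.
Local Open Scope ring_scope.

HB.instance Definition _ := Monoid.isComLaw.Build R R0 Rplus (fun a b c => esym (Rplus_assoc a b c)) Rplus_comm Rplus_0_l.

Section Aux.
Variables (F : fieldType) (X : vectType F) (r : nat) (Xs : 'I_r -> {vspace X}).
Hypothesis dir : directv (\sum_(i < r) Xs i)%VS.
Hypothesis full : (\sum_(i < r) Xs i)%VS = fullv.

Lemma rho_mem i x : rho Xs i x \in Xs i.
Proof. exact: memv_sum_pi. Qed.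

Lemma rho_sum x : \sum_(i < r) rho Xs i x = x.
Proof. by apply: sumv_pi_sum; rewrite full memvf. Qed.

Lemma rho_of_sum (y : 'I_r -> X) : (forall i, y i \in Xs i) ->
  forall j, rho Xs j (\sum_(i < r) y i) = y j.
Proof.
move=> Hy j.
have := (directv_sum_unique dir (fun i => rho Xs i (\sum_(i < r) y i)) y).
move=> /(_ (fun i _ => rho_mem i _) (fun i _ => Hy i)).
rewrite rho_sum eqxx => /esym /forallP /(_ j) /implyP /(_ isT) /eqP //.
Qed.

Lemma Gs_sum (h : X -> R) : in_Gs Xs h -> forall (y : 'I_r -> X),
  (forall i, y i \in Xs i) -> h (\sum_(i < r) y i) = \big[Rplus/R0]_(i < r) h (y i).
Proof.
move=> [_ Hh] y Hy; rewrite Hh; apply: eq_bigr => i _; by rewrite rho_of_sum.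
Qed.
End Aux.
Arguments rho_mem {F X r Xs}.
Arguments rho_sum {F X r Xs}.
Arguments rho_of_sum {F X r Xs}.
Arguments Gs_sum {F X r Xs}.

Lemma Rsum_le (r : nat) (a b : 'I_r -> R) : (forall i, Rle (a i) (b i)) ->
  Rle (\big[Rplus/R0]_(i < r) a i) (\big[Rplus/R0]_(i < r) b i).
Proof.
move=> H; apply: (big_ind2 (fun x y => Rle x y)); [exact: Rle_refl| |by []].
by move=> *; apply: Rplus_le_compat.
Qed.

Lemma Rsum_ge0 (r : nat) (a : 'I_r -> R) : (forall i, Rle R0 (a i)) ->
  Rle R0 (\big[Rplus/R0]_(i < r) a i).
Proof.
move=> H; apply: (big_ind (fun x => Rle R0 x)); [exact: Rle_refl| |by []].
by move=> x y hx hy; rewrite -(Rplus_0_l R0); apply: Rplus_le_compat.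
Qed.

Lemma Rsum_ge_term (r : nat) (a : 'I_r -> R) i : (forall i, Rle R0 (a i)) ->
  Rle (a i) (\big[Rplus/R0]_(j < r) a j).
Proof.
move=> H; rewrite (bigD1 i) //= -{1}(Rplus_0_r (a i)).
apply: Rplus_le_compat_l; apply: (big_ind (fun x => Rle R0 x)); [exact: Rle_refl| |by []].
by move=> x y hx hy; rewrite -(Rplus_0_l R0); apply: Rplus_le_compat.
Qed.

From Stdlib Require Import IndefiniteDescription Lra.

Section Step.
Variables (F : fieldType) (X U : vectType F) (A : 'End(X)) (B : 'Hom(U, X)).
Variables (r : nat) (Xs : 'I_r -> {vspace X}) (g Jn Jc : X -> R).
Hypothesis dec : decomposition A Xs.
Hypothesis gG : in_Gs Xs g.
Hypothesis JnG : in_Gs Xs Jn.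
Hypothesis cost : forall x, exists m,
    is_min_value (fun u => Jn (A x + B u)) m /\ Jc x = Rplus (g x) m.
Hypothesis amin : forall x, exists u, in_argmin (fun v => Jn (A x + B v)) u /\
               u \in (\sum_(i < r) Espace B Xs i)%VS.

Let M x := Rminus (Jc x) (g x).

Lemma HM1 x v : Rle (M x) (Jn (A x + B v)).
Proof.
rewrite /M; have [m [[_ Hm] ->]] := cost x.
have := Hm v => /=; lra.
Qed.

Lemma HM2 x : exists u, M x = Jn (A x + B u) /\ u \in (\sum_(i < r) Espace B Xs i)%VS.
Proof.
have [u [Hu Hmem]] := amin x; exists u; split => //.
have [m [[[u0 Hu0] Hm] Hc]] := cost x; rewrite /M Hc.
have := Hu u0; have := Hm u => /=; rewrite Hu0; lra.
Qed.

Lemma decompE u : u \in (\sum_(i < r) Espace B Xs i)%VS ->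
  exists e : 'I_r -> U, (forall i, B (e i) \in Xs i) /\ u = \sum_(i < r) e i.
Proof.
move=> /memv_sumP [e He ->]; exists e; split => // i.
by rewrite memv_preim; apply: He.
Qed.

Lemma Arho_mem i x : A (rho Xs i x) \in Xs i.
Proof.
case: dec => _ [_ [_ Hinv]].
apply: (subvP (Hinv i)); apply: memv_img; exact: rho_mem.
Qed.

Lemma splitE x (e : 'I_r -> U) :
  A x + B (\sum_(i < r) e i) = \sum_(i < r) (A (rho Xs i x) + B (e i)).
Proof.
case: dec => _ [_ [full _]].
by rewrite big_split /= -!linear_sum /= (rho_sum full).
Qed.

Lemma JnE x (e : 'I_r -> U) : (forall i, B (e i) \in Xs i) ->
  Jn (A x + B (\sum_(i < r) e i)) =
  \big[Rplus/R0]_(i < r) Jn (A (rho Xs i x) + B (e i)).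
Proof.
move=> He; case: dec => _ [dir [full _]].
rewrite splitE (Gs_sum dir full _ JnG) // => i.
by apply: rpredD; [apply: Arho_mem| apply: He].
Qed.

Lemma Mx_ge x : Rle (\big[Rplus/R0]_(i < r) M (rho Xs i x)) (M x).
Proof.
have [u [-> /decompE [e [He ->]]]] := HM2 x.
rewrite JnE //; apply: Rsum_le => i; exact: HM1.
Qed.

Lemma Mx_le x : Rle (M x) (\big[Rplus/R0]_(i < r) M (rho Xs i x)).
Proof.
case: dec => _ [dir [full _]].
have H : forall i, {e : 'I_r -> U | (forall j, B (e j) \in Xs j) /\
     M (rho Xs i x) = Jn (A (rho Xs i x) + B (\sum_(j < r) e j))}.
  move=> i; apply: constructive_indefinite_description.
  have [u [Hu /decompE [e [He Hue]]]] := HM2 (rho Xs i x).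
  by exists e; split => //; rewrite -Hue.
pose w i := proj1_sig (H i) i.
have Hw : forall i, B (w i) \in Xs i.
  by move=> i; rewrite /w; case: (H i) => e [He _] /=.
have Hwle : forall i, Rle (Jn (A (rho Xs i x) + B (w i))) (M (rho Xs i x)).
  move=> i; rewrite /w; case: (H i) => e [He HeM] /=; rewrite HeM.
  pose y j := (if j == i then A (rho Xs i x) else 0) + B (e j).
  have Hy : forall j, y j \in Xs j.
    move=> j; rewrite /y; case: eqP => [->|_].
      by apply: rpredD; [apply: Arho_mem|apply: He].
    by rewrite add0r.
  have -> : A (rho Xs i x) + B (\sum_(j < r) e j) = \sum_(j < r) y j.
    rewrite /y big_split /= -big_mkcond /= big_pred1_eq.
    by rewrite linear_sum.
  rewrite (Gs_sum dir full _ JnG) //.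
  have -> : Jn (A (rho Xs i x) + B (e i)) = Jn (y i) by rewrite /y eqxx.
  apply: Rsum_ge_term => j; by case: JnG => + _; apply.
apply: Rle_trans (HM1 x (\sum_(i < r) w i)) _.
rewrite JnE //; exact: Rsum_le.
Qed.

Lemma step_Gs : in_Gs Xs Jc.
Proof.
have JcE : forall y, Jc y = Rplus (g y) (M y) by move=> y; rewrite /M; lra.
split.
  move=> x; rewrite JcE; have [u [-> _]] := HM2 x.
  case: gG => g0 _; case: JnG => J0 _; have := g0 x; have := J0 (A x + B u); lra.
move=> x.
rewrite (eq_bigr (fun i => Rplus (g (rho Xs i x)) (M (rho Xs i x)))); last first.
  by move=> i _; rewrite JcE.
rewrite big_split /= JcE.
rewrite -(proj2 gG x); apply: Rplus_eq_compat_l; apply: Rle_antisym.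
  exact: Mx_le.
exact: Mx_ge.
Qed.
End Step.

Theorem proposition2 (F : fieldType) (X U : vectType F)
    (A : 'End(X)) (B : 'Hom(U, X)) (g : X -> R)
    (r : nat) (Xs : 'I_r -> {vspace X}) (T : nat) (J : nat -> X -> R) :
  injective B ->
  (forall x, Rle R0 (g x)) ->
  (forall x, g x = R0 <-> x = 0) ->
  decomposition A Xs ->
  in_Gs Xs g ->
  (0 < T)%N ->
  cost_to_go A B g T J ->
  (forall x t, (t < T)%N ->
     exists u, in_argmin (fun v => J t.+1 (A x + B v)) u /\
               u \in (\sum_(i < r) Espace B Xs i)%VS) ->
  forall t, (t <= T)%N -> in_Gs Xs (J t).
Proof.
move=> _ _ _ dec gG _ [JT Jstep] Hamin.
suff H : forall k, (k <= T)%N -> in_Gs Xs (J (T - k)%N).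
  by move=> t ht; have := H (T - t)%N (leq_subr _ _); rewrite subKn.
elim=> [|k IH] hk; first by rewrite subn0 JT.
have ht : (T - k.+1 < T)%N by rewrite ltn_subrL (leq_trans _ hk).
have e : (T - k.+1).+1 = (T - k)%N by rewrite subnSK.
set t := (T - k.+1)%N in ht e *.
have IH' : in_Gs Xs (J t.+1) by rewrite e; apply: IH; apply: ltnW.
exact: (@step_Gs _ _ _ A B r Xs g (J t.+1) (J t) dec gG IH' (Jstep t ht) (fun x => Hamin x t ht)).
Qed.
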